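(* Let $A \in \mathbb{R}^{m \times n}$ be such that the map $\psi_A : \mathbb{R}^n \to \{-1,0,1\}^m$, $\psi_A(\mathbf{x}) = \mathrm{sign}(A\mathbf{x})$, satisfies $\psi_A(\mathbf{x}_1) \neq \psi_A(\mathbf{x}_2)$ whenever $\|\mathbf{x}_1\|_0, \|\mathbf{x}_2\|_0 \le k$ and $\mathrm{supp}(\mathbf{x}_1) \neq \mathrm{supp}(\mathbf{x}_2)$. Then $m = \Omega(k^2 \log n / \log k)$.
   Context: For real $x$, $\mathrm{sign}(x) = x/|x|$ if $x \neq 0$ and $\mathrm{sign}(0) = 0$, applied coordinatewise to vectors. $\|\mathbf{x}\|_0$ denotes the number of nonzero coordinates of $\mathbf{x}$, and $\mathrm{supp}(\mathbf{x})$ the set of indices of nonzero coordinates. *)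

(* Defs.v *)
From HB Require Import structures.
From mathcomp Require Import all_boot all_order all_algebra.
From mathcomp Require Import all_classical all_reals all_analysis.
Set Implicit Arguments. Unset Strict Implicit. Unset Printing Implicit Defensive.
Import Order.TTheory GRing.Theory Num.Theory.
Local Open Scope ring_scope.

Definition sgv {R : numDomainType} {m : nat} (v : 'cV[R]_m) : 'cV[R]_m :=
  map_mx Num.sg v.

Definition psi {R : numDomainType} {m n : nat} (A : 'M[R]_(m, n)) (x : 'cV[R]_n)
  : 'cV[R]_m := sgv (A *m x).

Definition supp {R : numDomainType} {n : nat} (x : 'cV[R]_n) : {set 'I_n} :=
  [set i | x i 0 != 0].

Definition l0norm {R : numDomainType} {n : nat} (x : 'cV[R]_n) : nat := #|supp x|.

Definition separates_supports {R : numDomainType} {m n : nat} (k : nat)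
  (A : 'M[R]_(m, n)) : Prop :=
  forall x1 x2 : 'cV[R]_n,
    (l0norm x1 <= k)%N -> (l0norm x2 <= k)%N -> supp x1 != supp x2 ->
    psi A x1 != psi A x2.

(* Main.v *)
Require Import Defs.
From HB Require Import structures.
From mathcomp Require Import all_boot all_order all_algebra.
From mathcomp Require Import all_classical all_reals all_analysis.
From mathcomp Require Import zify ring lra.
Set Implicit Arguments. Unset Strict Implicit. Unset Printing Implicit Defensive.
Import Order.TTheory GRing.Theory Num.Theory.

Definition cfree (m n e : nat) (f : 'I_n -> {set 'I_m}) (Y : {set 'I_m})
  (J : {set 'I_n}) : Prop :=
  forall (S : {set 'I_n}) (j : 'I_n), S \subset J -> (#|S| <= e)%N ->
    j \in J -> j \notin S -> ~~ (f j :&: Y \subset \bigcup_(s in S) f s).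

Lemma subset_min (m t : nat) (F : {set 'I_m}) :
  exists T : {set 'I_m}, T \subset F /\ #|T| = minn t #|F|.
Proof.
elim: t => [|t [T [TF cT]]]; first by exists finset.set0; rewrite finset.sub0set cards0 min0n.
have [lt|ge] := ltnP t #|F|.
  have : #|F :\: T| != 0%N.
    by rewrite cardsD (finset.setIidPr TF) cT; apply/eqP; lia.
  rewrite cards_eq0 => /set0Pn [x]; rewrite inE => /andP [xT xF].
  exists (x |: T); rewrite finset.subUset finset.sub1set xF TF cardsU1 xT cT; split=> //; lia.
exists T; split=> //; rewrite cT; lia.
Qed.

Lemma cover (m n t : nat) (f : 'I_n -> {set 'I_m}) (J : {set 'I_n}) j (a : nat) :
  forall F : {set 'I_m}, (#|F| <= a * t)%N ->
  (forall T : {set 'I_m}, T \subset F -> (#|T| <= t)%N ->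
     exists j', [/\ j' \in J, j' != j & T \subset f j']) ->
  exists S : {set 'I_n}, [/\ S \subset J :\ j, (#|S| <= a)%N &
                            F \subset \bigcup_(s in S) f s].
Proof.
elim: a => [|a IH] F cF H.
  exists finset.set0; rewrite finset.sub0set cards0; split=> //.
  by move: cF; rewrite mul0n leqn0 => /eqP /cards0_eq ->; rewrite finset.sub0set.
have [T [TF cT]] := subset_min t F.
have [S [SJ cS FS]] : exists S : {set 'I_n}, [/\ S \subset J :\ j, (#|S| <= a)%N &
                            F :\: T \subset \bigcup_(s in S) f s].
  apply: IH.
    rewrite cardsD (finset.setIidPr TF) cT; move: cF; rewrite mulSn; lia.
  move=> T' T'F cT'; apply: H cT'; apply: fintype.subset_trans T'F _; exact: subsetDl.
have [|j' [j'J j'j Tj']] := H T TF; first by rewrite cT geq_minl.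
exists (j' |: S); split.
- by rewrite finset.subUset finset.sub1set !inE j'j j'J SJ.
- rewrite cardsU1; case: (j' \notin S) => /=; [rewrite add1n ltnS|rewrite add0n; apply: leq_trans cS _] => //.
apply/fintype.subsetP => x xF; apply/finset.bigcupP.
case xT: (x \in T).
  by exists j'; [rewrite finset.setU11 | exact: (fintype.subsetP Tj')].
have : x \in F :\: T by rewrite inE xT xF.
move/(fintype.subsetP FS)/finset.bigcupP => [s sS xs]; exists s => //; by rewrite finset.setU1r.
Qed.
Lemma own (m n e t : nat) (f : 'I_n -> {set 'I_m}) Y J j :
  cfree e.+1 f Y J -> j \in J -> (#|f j :&: Y| <= e.+1 * t)%N ->
  exists T : {set 'I_m}, [/\ T \subset f j :&: Y, (#|T| <= t)%N &
      forall j', j' \in J -> j' != j -> ~~ (T \subset f j')].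
Proof.
move=> cf jJ cF; apply: contrapT => Hn.
have [|S [SJ cS FS]] := cover (f:=f) (J:=J) (j:=j) cF.
  move=> T TF cT; apply: contrapT => Hn2; apply: Hn; exists T; split=> //.
  move=> j' j'J j'j; apply/negP => Tj'; apply: Hn2; exists j'; split=> //.
have H := cf S j; rewrite FS cS jJ in H.
suff : ~~ true by [].
apply: H => //.
- by apply: fintype.subset_trans SJ _; exact: subsetDl.
- by apply/negP => /(fintype.subsetP SJ); rewrite !inE eqxx.
Qed.

Lemma count_small (m t : nat) :
  #|[set T : {set 'I_m} | (#|T| <= t)%N]| = (\sum_(i < t.+1) 'C(m, i))%N.
Proof.
elim: t => [|t IH].
  rewrite big_ord_recr big_ord0 /= bin0.
  have -> : [set T : {set 'I_m} | (#|T| <= 0)%N] = [set finset.set0].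
    apply/setP => T; rewrite !inE leqn0 cards_eq0; done.
  by rewrite cards1.
rewrite big_ord_recr /= -IH.
have -> : [set T : {set 'I_m} | (#|T| <= t.+1)%N] =
   [set T : {set 'I_m} | (#|T| <= t)%N] :|: [set T : {set 'I_m} | #|T| == t.+1].
  by apply/setP => T; rewrite !inE leq_eqVlt ltnS orbC.
rewrite cardsU card_draws card_ord.
have -> : #|[set T : {set 'I_m} | (#|T| <= t)%N] :&: [set T : {set 'I_m} | #|T| == t.+1]| = 0%N.
  apply: eq_card0 => T; rewrite !inE; apply/negP => /andP [h /eqP e]; move: h; rewrite e ltnn //.
by rewrite subn0.
Qed.

Lemma main_comb (m n t : nat) (f : 'I_n -> {set 'I_m}) (e : nat) :
  forall (Y : {set 'I_m}) (J : {set 'I_n}), cfree e f Y J ->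
  (2 * #|Y| <= t * (e * e.+1))%N ->
  (#|J| <= e + #|[set T : {set 'I_m} | (#|T| <= t)%N]|)%N.
Proof.
elim: e => [|e IH] Y J cf cY.
  move: cY; rewrite mul0n muln0 leqn0 muln_eq0 /= cards_eq0 => /eqP Y0.
  case: (set_0Vmem J) => [->|[j jJ]]; first by rewrite cards0.
  exfalso; move: (cf finset.set0 j); rewrite finset.sub0set cards0 jJ inE.
  by rewrite Y0 finset.setI0 finset.sub0set => /(_ isT isT isT isT).
case: (pselect (exists j0, j0 \in J /\ (e.+1 * t < #|f j0 :&: Y|)%N)).
  move=> [j0 [j0J big]].
  have cf' : cfree e f (Y :\: f j0) (J :\ j0).
    move=> S j SJ cS jJ jS; apply/negP => cov.
    have jj0 : j != j0 by move: jJ; rewrite !inE => /andP [].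
    have jJ0 : j \in J by move: jJ; rewrite !inE => /andP [].
    move: (cf (j0 |: S) j); rewrite finset.subUset finset.sub1set j0J jJ0.
    rewrite (fintype.subset_trans SJ (subsetDl _ _)) !inE (negbTE jj0) (negbTE jS) /=.
    rewrite cardsU1.
    have -> : ((j0 \notin S) + #|S| <= e.+1)%N = true.
      by case: (j0 \notin S); rewrite /= ?addn1 ?addn0 ?ltnS //; apply: leqW.
    move/(_ isT isT isT isT)/negP; apply.
    apply/fintype.subsetP => x; rewrite inE => /andP [xj xY].
    apply/finset.bigcupP.
    case xj0: (x \in f j0).
      by exists j0 => //; rewrite finset.setU11.
    have : x \in f j :&: (Y :\: f j0) by rewrite !inE xj xY xj0.
    move/(fintype.subsetP cov)/finset.bigcupP => [s sS xs].
    by exists s => //; rewrite finset.setU1r.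
  have := IH _ _ cf'.
  have c1 := cardsID (f j0) Y.
  rewrite (cardsD1 j0 J) j0J.
  rewrite finset.setIC in big.
  move=> H; have {}H := H _.
  suff : (2 * #|Y :\: f j0| <= t * (e * e.+1))%N by move/H; lia.
  nia.
move=> Hno.
have small : forall j, j \in J -> (#|f j :&: Y| <= e.+1 * t)%N.
  move=> j jJ; rewrite leqNgt; apply/negP => h; apply: Hno; by exists j.
pose P j (T : {set 'I_m}) := [&& T \subset f j :&: Y, (#|T| <= t)%N &
      [forall j' in J, (j' != j) ==> ~~ (T \subset f j')]].
pose g j := odflt finset.set0 [pick T | P j T].
have gP : forall j, j \in J -> P j (g j).
  move=> j jJ; rewrite /g; case: pickP => [T //|none].
  have [T [T1 T2 T3]] := own cf jJ (small j jJ).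
  exfalso; move: (none T); rewrite /P T1 T2 /=; move/negP; apply.
  apply/forall_inP => j' j'J; apply/implyP => j'j; exact: T3.
have inj : {in J &, injective g}.
  move=> j1 j2 j1J j2J eg; case: (eqVneq j1 j2) => // ne; exfalso.
  move: (gP _ j1J) (gP _ j2J) => /and3P [s1 _ _] /and3P [_ _ /forall_inP h].
  move: (h j1 j1J); rewrite ne /= -eg => /negP; apply.
  by apply: fintype.subset_trans s1 _; exact: subsetIl.
apply: leq_trans (leq_addl _ _).
rewrite -(card_in_imset inj); apply: subset_leq_card.
apply/fintype.subsetP => T /imsetP [j jJ ->]; rewrite inE.
by case/and3P: (gP _ jJ).
Qed.
Local Open Scope ring_scope.

Lemma sg_lemma (R : realDomainType) (N a b : R) :
  0 < N -> (b = 0 \/ `|b| < N * `|a|) -> Num.sg (N * a + b) = Num.sg a.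
Proof.
move=> N0 [->|hb].
  by rewrite addr0 sgrM gtr0_sg // mul1r.
have b1 := ler_norm b; have b2 := ler_norm (- b); rewrite normrN in b2.
have [an|ap|a0] := ltrgtP a 0.
- rewrite (ltr0_norm an) in hb.
  have h2 : N*a+b < 0 by rewrite mulrN in hb; lra.
  by rewrite (ltr0_sg h2) (ltr0_sg an).
- rewrite (gtr0_norm ap) in hb.
  have h2 : 0 < N*a+b by lra.
  by rewrite (gtr0_sg h2) (gtr0_sg ap).
- rewrite a0 normr0 mulr0 in hb; have := normr_ge0 b; lra.
Qed.

Lemma exists_nonroot (R : realType) (P : {poly R}) : P != 0 -> exists M : R, P.[M] != 0.
Proof.
move=> P0; apply: contrapT => Hn.
pose rs : seq R := [seq i%:R | i <- iota 0 (size P)].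
have Hall : all (root P) rs.
  apply/allP => x /mapP [i _ ->]; rewrite /root; apply/negPn/negP => h; apply: Hn.
  by exists i%:R.
have Hu : uniq rs.
  rewrite map_inj_uniq ?iota_uniq // => a b /eqP; rewrite eqr_nat => /eqP.
  by [].
have := max_poly_roots P0 Hall Hu.
by rewrite size_map size_iota ltnn.
Qed.

Lemma reduce (R : realType) (m n k : nat) (A : 'M[R]_(m, n)) :
  separates_supports k A -> forall (S : {set 'I_n}) j, (#|S| < k)%N -> j \notin S ->
  exists r, (forall s, s \in S -> A r s = 0) /\ A r j != 0.
Proof.
move=> sep S j cS jS; apply: contrapT => Hn.
have H : forall r, (forall s, s \in S -> A r s = 0) -> A r j = 0.
  move=> r h; apply: contrapT => h2; apply: Hn; exists r; split=> //; exact/eqP.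
pose p r : {poly R} := \sum_(s in S) A r s *: 'X^s.
have pE : forall r, p r = 0 -> forall s, s \in S -> A r s = 0.
  move=> r pr s sS; have := congr1 (fun q : {poly R} => q`_s) pr.
  rewrite coef0 /p coef_sum (bigD1 s) //= coefZ coefXn eqxx mulr1 big1 ?addr0 //.
  move=> s' /andP [_ ne]; rewrite coefZ coefXn.
  have -> : (nat_of_ord s == nat_of_ord s') = false.
    by apply/negbTE; rewrite eq_sym.
  by rewrite mulr0.
pose P := 'X * \prod_r (if p r == 0 then 1 else p r).
have P0 : P != 0.
  rewrite mulf_neq0 ?polyX_eq0 //; apply/prodf_neq0 => r _.
  by case: ifP => [_|h]; [exact: oner_neq0 | exact: negbT h].
have [M PM] := exists_nonroot P0.
move: PM; rewrite /P hornerM hornerX horner_prod mulf_eq0 negb_or => /andP [M0].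
move/prodf_neq0 => pM.
have pM' : forall r, p r != 0 -> (p r).[M] != 0.
  by move=> r pr; have := pM r isT; rewrite (negbTE pr).
pose x1 : 'cV[R]_n := \col_i (if i \in S then M ^+ i else 0).
have Ax1 : forall r, (A *m x1) r 0 = (p r).[M].
  move=> r; rewrite !mxE /p horner_sum (big_mkcond (fun i => i \in S)) /=.
  apply: eq_bigr => i _; rewrite !mxE hornerZ hornerXn; by case: (i \in S); rewrite ?mulr0.
have key : forall r, A r j != 0 -> (A *m x1) r 0 != 0.
  move=> r arj; rewrite Ax1; case: (eqVneq (p r) 0) => [pr|pr]; last exact: pM'.
  by move: arj; rewrite (H r (pE r pr)) eqxx.
pose N : R := 1 + \sum_r `|A r j| / `|(A *m x1) r 0|.
have N0 : 0 < N.
  rewrite /N ltr_pwDl // sumr_ge0 // => r _; exact: divr_ge0.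
pose x2 : 'cV[R]_n := N *: x1 + delta_mx j 0.
have psiE : psi A x2 = psi A x1.
  apply/matrixP => r c; rewrite ord1 /psi /sgv /x2 mulmxDr -scalemxAr -colE.
  rewrite mxE [RHS]mxE.
  have -> : (N *: (A *m x1) + col j A) r 0 = N * (A *m x1) r 0 + A r j by rewrite !mxE.
  apply: sg_lemma => //.
  case: (eqVneq (A r j) 0) => [->|arj]; [by left | right].
  have ax := key r arj.
  have na : 0 < `|(A *m x1) r 0| by rewrite normr_gt0.
  set q := `|A r j| / `|(A *m x1) r 0|.
  have qa : q * `|(A *m x1) r 0| = `|A r j| by rewrite /q divfK // normr_eq0.
  have qN : q < N.
    rewrite /N (bigD1 r) //= -/q.
    have : 0 <= \sum_(i | i != r) `|A i j| / `|(A *m x1) i 0|.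
      by apply: sumr_ge0 => i _; exact: divr_ge0.
    lra.
  rewrite -qa; nra.
have supp1 : supp x1 = S.
  apply/setP => i; rewrite /supp inE !mxE.
  by case: (i \in S); rewrite ?eqxx // expf_neq0.
have supp2 : supp x2 = j |: S.
  apply/setP => i; rewrite /supp !inE !mxE /= andbT.
  case: (eqVneq i j) => [->|ne] /=.
    by rewrite (negbTE jS) mulr0 add0r oner_neq0.
  rewrite addr0; case: (i \in S); rewrite ?mulr0 ?eqxx //.
  by rewrite mulf_neq0 ?expf_neq0 // gt_eqF.
have := sep x1 x2; rewrite psiE eqxx /l0norm supp1 supp2.
rewrite cardsU1 jS (ltnW cS) add1n cS => h.
suff : ~~ true by [].
apply: h => //.
apply/negP => /eqP /setP /(_ j); rewrite finset.setU11 (negbTE jS).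
by [].
Qed.

Lemma binom_bound (R : realType) (m t : nat) : (0 < t)%N ->
  ((\sum_(i < t.+1) 'C(m, i))%N%:R : R) <= expR (t%:R) * (((m + t)%:R / t%:R) ^+ t).
Proof.
move=> t0.
have tR : (0 : R) < t%:R by rewrite ltr0n.
have mtR : (0 : R) < (m + t)%:R by rewrite ltr0n; lia.
pose x : R := t%:R / (m + t)%:R.
have x0 : 0 < x by rewrite divr_gt0.
have x1 : x <= 1 by rewrite ler_pdivrMr // mul1r ler_nat leq_addl.
pose f i : R := 'C(m, i)%:R * x ^+ i.
have f0 : forall i, 0 <= f i by move=> i; rewrite mulr_ge0 // exprn_ge0 // ltW.
have S1 : ((\sum_(i < t.+1) 'C(m, i))%N%:R : R) * x ^+ t <= \sum_(i < t.+1) f i.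
  rewrite natr_sum mulr_suml; apply: ler_sum => i _.
  rewrite /f ler_wpM2l // ler_wiXn2l // ?ltW // -ltnS; exact: ltn_ord.
have S2 : \sum_(i < t.+1) f i <= \sum_(i < (m + t).+1) f i.
  rewrite (big_ord_widen (m + t).+1 f) ?ltnS ?leq_addl //.
  rewrite [X in _ <= X](bigID (fun i : 'I_(m + t).+1 => (i < t.+1)%N)) /= lerDl.
  by apply: sumr_ge0 => ? _.
have S3 : \sum_(i < (m + t).+1) f i = (1 + x) ^+ m.
  rewrite addrC exprD1n (big_ord_widen (m + t).+1 (fun i => x ^+ i *+ 'C(m, i))) ?ltnS ?leq_addr //.
  rewrite [RHS]big_mkcond /=; apply: eq_bigr => i _; rewrite /f.
  case: ifP => [_|]; first by rewrite mulr_natl.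
  by move=> h; rewrite bin_small ?mul0r //; move: h; rewrite ltnS => /negbT; rewrite -ltnNge.
have S4 : (1 + x) ^+ m <= expR (t%:R).
  apply: (@le_trans _ _ (expR x ^+ m)).
    apply: lerXn2r; [rewrite nnegrE addr_ge0 // ltW // | rewrite nnegrE expR_ge0 // | exact: expR_ge1Dx].
  rewrite -expRM_natl ler_expR /x mulrA ler_pdivrMr // -!natrM ler_nat; nia.
have xt : 0 < x ^+ t by rewrite exprn_gt0.
have -> : ((m + t)%:R / t%:R : R) = x^-1 by rewrite /x invf_div.
rewrite exprVn ler_pdivlMr //.
apply: le_trans S1 _; apply: le_trans S2 _; rewrite S3; exact: S4.
Qed.

Lemma ln2_ge (R : realType) : 1 <= 2 * ln (2 : R).
Proof.
have hx : (-1 : R) < - 2^-1 by rewrite ltrN2; rewrite invf_lt1 //; lra.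
have h := @le_ln1Dx R (- 2^-1) hx.
have e : (1 - 2^-1 : R) = 2^-1 by field.
rewrite e lnV ?posrE // in h; lra.
Qed.

Unset Implicit Arguments.
Set Strict Implicit.

Theorem theorem2 (R : realType) :
  exists c : R, 0 < c /\
    forall (n k m : nat) (A : 'M[R]_(m, n)),
      (2 <= k)%N -> (k ^ 2 <= n)%N ->
      separates_supports k A ->
      c * (k ^ 2)%:R * ln (n%:R : R) / ln (k%:R : R) <= m%:R.
Proof.
exists (36^-1); split; first by rewrite invr_gt0.
move=> n k m A k2 kn sep.
have [d kd] : exists d, k = d.+1 by exists k.-1; move: k2; clear; lia.
pose f (j : 'I_n) : {set 'I_m} := [set r | A r j != 0].
have cf : cfree d f [set: 'I_m] [set: 'I_n].
  move=> S j _ cS _ jS.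
  have cS' : (#|S| < k)%N by move: cS k2 kd; clear; lia.
  have [r [Ar Arj]] := reduce sep cS' jS.
  apply/negP => sub.
  have : r \in f j :&: [set: 'I_m] by rewrite !inE Arj.
  move/(fintype.subsetP sub)/finset.bigcupP => [s sS]; rewrite inE (Ar s sS) eqxx.
  by [].
have cT : forall p, #|[set: 'I_p]| = p by move=> p; rewrite cardsT card_ord.
have kk : (k * k <= n)%N by rewrite mulnn.
have dk0 : (0 < d * k)%N by move: k2 kd; clear; nia.
have base : (d * k < 2 * m)%N.
  rewrite ltnNge; apply/negP => hb.
  have hb' : (2 * #|[set: 'I_m]| <= 1 * (d * d.+1))%N by rewrite cT mul1n -kd.
  have := main_comb cf hb'; rewrite !cT.
  rewrite count_small big_ord_recr big_ord_recr big_ord0 /= bin0 bin1 add0n.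
  move: kk k2 hb kd; clear; nia.
pose t := ((2 * m) %/ (d * k)).+1.
have t1 := ltn_ceil (2 * m) dk0; rewrite -/t in t1.
have t2 : (t * (d * k) <= 2 * m + d * k)%N.
  by rewrite /t mulSn addnC leq_add2r leq_divM.
have t0 : (0 < t)%N by [].
have ht : (2 * #|[set: 'I_m]| <= t * (d * d.+1))%N by rewrite cT -kd ltnW.
have hn := main_comb cf ht; rewrite !cT in hn.
rewrite count_small in hn.
set Nt := (\sum_(i < t.+1) 'C(m, i))%N in hn.
have n2 : (n <= 2 * Nt)%N by move: kk k2 hn kd; clear; nia.
have mtk : (m + t <= t * (k * k))%N by move: t1 k2 kd; clear; nia.
have fin : (k * k * (1 + 4 * t) <= 36 * m)%N by move: t2 base k2 kd; clear; nia.
have bb := binom_bound R m t0; rewrite -/Nt in bb.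
have kR : (1 : R) < k%:R by rewrite ltr1n; move: k2 kd; clear; lia.
have lk : 0 < ln (k%:R : R) by exact: ln_gt0.
have tR : (0 : R) < t%:R by rewrite ltr0n.
have NtR : (0 : R) < Nt%:R by rewrite ltr0n; move: n2 kk k2 kd; clear; nia.
have qR : (0 : R) < (m + t)%:R / t%:R by rewrite divr_gt0 // ltr0n addn_gt0 t0 orbT.
have l2 := ln2_ge R.
have l2k : ln (2 : R) <= ln (k%:R : R).
  by rewrite ler_ln ?posrE ?ler_nat // ltr0n; move: k2 kd; clear; lia.
have lnq : ln ((m + t)%:R / t%:R : R) <= 2 * ln (k%:R : R).
  have kp : (0 < k)%N by move: k2; clear; lia.
  have e2 : ln ((k * k)%N%:R : R) = 2 * ln (k%:R : R).
    rewrite natrM lnM ?posrE ?ltr0n //; lra.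
  rewrite -e2.
  rewrite ler_ln ?posrE ?ltr0n //; last by move: k2 kd; clear; nia.
  by rewrite ler_pdivrMr // -natrM ler_nat mulnC.
have lNt : ln (Nt%:R : R) <= t%:R + t%:R * ln ((m + t)%:R / t%:R : R).
  have := bb; rewrite -ler_ln ?posrE // ?mulr_gt0 ?expR_gt0 ?exprn_gt0 //.
  rewrite lnM ?posrE ?expR_gt0 ?exprn_gt0 //.
  rewrite expRK lnXn // mulr_natl => h; lra.
have lnn : ln (n%:R : R) <= ln 2 + ln (Nt%:R : R).
  have n0 : (0 < n)%N by move: kk k2 kd; clear; nia.
  have Nt0 : (0 < Nt)%N by move: n2 kk k2 kd; clear; nia.
  have h : (n%:R : R) <= 2 * Nt%:R by rewrite -(natrM R 2 Nt) ler_nat.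
  move: h; rewrite -ler_ln ?posrE ?mulr_gt0 ?ltr0n //.
  rewrite lnM ?posrE ?ltr0n // => h; lra.
have key : ln (n%:R : R) <= ln (k%:R : R) * (1 + 4 * t%:R).
  have : t%:R * ln ((m + t)%:R / t%:R : R) <= t%:R * (2 * ln (k%:R : R)).
    by rewrite ler_pM2l.
  have : (t%:R : R) <= t%:R * (2 * ln 2) by rewrite ler_peMr // ltW.
  have : (t%:R : R) * (2 * ln 2) <= t%:R * (2 * ln (k%:R : R)).
    by rewrite ler_pM2l // ler_pM2l.
  lra.
have finR : ((k * k)%N%:R : R) * (1 + 4 * t%:R) <= 36 * m%:R.
  have := fin; rewrite -(ler_nat R) !natrM natrD !natrM.
  by [].
rewrite ler_pdivrMr // -mulnn natrM.
have k0 : (0 : R) <= k%:R by [].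
have : (k%:R * k%:R : R) * ln n%:R <= (k%:R * k%:R) * (ln k%:R * (1 + 4 * t%:R)).
  by rewrite ler_wpM2l // mulr_ge0.
rewrite natrM in finR.
have : (k%:R * k%:R : R) * (1 + 4 * t%:R) * ln k%:R <= 36 * m%:R * ln k%:R.
  by rewrite ler_wpM2r // ltW.
nra.
Qed.
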